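(* Let $n\ge0$ and $k\ge1$ be integers, let $n=n_1+\dots+n_k$ with integers $n_i\ge0$, and let $m\ge n+k-1$. Then \[ \binom{m}{n}=\sum_{j=0}^{k-1}(-1)^j\binom{k-1}{j}\sum_{\substack{m_1+\dots+m_k=m-j\\ m_i\ge n_i}}\ \prod_{i=1}^{k}\binom{m_i}{n_i}. \] *)

(* Defs.v *)
From mathcomp Require Import all_boot all_order all_algebra.
Set Implicit Arguments. Unset Strict Implicit. Unset Printing Implicit Defensive.

(* Main.v *)
Require Import Defs.
From mathcomp Require Import all_boot all_order all_algebra.
From mathcomp Require Import zify.
Import GRing.Theory.
Local Open Scope ring_scope.

Local Open Scope ring_scope.
Lemma diffstep K (g : nat -> int) :
  \sum_(j < K.+2) (-1) ^+ j * ('C(K.+1, j))%:R * g j =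
  \sum_(j < K.+1) (-1) ^+ j * ('C(K, j))%:R * (g j - g j.+1).
Proof.
rewrite big_ord_recl /=.
under eq_bigr do rewrite /bump /= add1n binS natrD mulrDr mulrDl.
rewrite big_split /=.
have E1 : \sum_(j < K.+1) (-1) ^+ j * ('C(K, j))%:R * g j =
   \sum_(0 <= j < 1) (-1) ^+ j * ('C(K, j))%:R * g j +
   \sum_(j < K.+1) (-1) ^+ j.+1 * ('C(K, j.+1))%:R * g j.+1.
  rewrite big_nat1 big_ord_recl [in RHS]big_ord_recr /= (@bin_small K K.+1) // mulr0n mulr0 mul0r addr0.
  by [].
under [in RHS]eq_bigr do rewrite mulrBr.
rewrite sumrB E1 big_nat1 !bin0 addrA.
congr (_ + _ + _).
rewrite -sumrN; apply: eq_bigr => j _.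
by rewrite exprS !mulN1r !mulNr.
Qed.

Lemma altsum K m n :
  \sum_(j < K.+1) (-1) ^+ j * ('C(K, j))%:R * ('C(m + K - j, n + K))%:R = ('C(m, n))%:R :> int.
Proof.
elim: K => [|K IH].
  by rewrite big_ord1 expr0 mul1r bin0 mul1r !addn0 subn0.
rewrite (diffstep K (fun j => ('C(m + K.+1 - j, n + K.+1))%:R)) -{}IH; apply: eq_bigr => j _; congr (_ * _).
have Hj : (j <= K)%N by rewrite -ltnS.
have -> : (m + K.+1 - j = (m + K - j).+1)%N by lia.
have -> : (m + K.+1 - j.+1 = (m + K - j))%N by lia.
by rewrite addnS binS natrD addrC addKr.
Qed.

Local Open Scope nat_scope.
Lemma vand s p : forall t q,
  (\sum_(a < t.+1) 'C(a + s, p + s) * 'C(t - a, q) = 'C(t + s + 1, p + q + s + 1))%N.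
Proof.
elim=> [|t IH] q.
  rewrite big_ord1 /= add0n sub0n bin0n.
  case: q => [|q] /=.
    by rewrite muln1 addn0 addn1 addn1 binS (@bin_small s (p + s).+1) ?add0n //; lia.
  by rewrite muln0 bin_small //; lia.
rewrite big_ord_recr /= subnn.
have E : forall a : 'I_t.+1, 'C(widen_ord (leqnSn t.+1) a + s, p + s) * 'C(t.+1 - widen_ord (leqnSn t.+1) a, q)
   = 'C(a + s, p + s) * 'C((t - a).+1, q).
  by move=> a /=; rewrite subSn // -ltnS.
rewrite (eq_bigr _ (fun a _ => E a)) {E}.
case: q => [|q].
  rewrite bin0 muln1.
  under eq_bigr do rewrite bin0.
  have -> : (\sum_(i<t.+1) 'C(i+s,p+s) * 1 = 'C(t+s+1,p+s+1))%N.
    by have := IH 0; rewrite addn0 => <-; apply: eq_bigr => i _; rewrite bin0.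
  rewrite addn0.
  have -> : (t.+1 + s + 1 = (t + s + 1).+1)%N by lia.
  have -> : (p + s + 1 = (p + s).+1)%N by lia.
  by rewrite binS addn1 addSn.
under eq_bigr do rewrite binS mulnDr.
rewrite big_split /= IH IH muln0 addn0.
have -> : (t.+1 + s + 1 = (t + s + 1).+1)%N by lia.
have -> : (p + q.+1 + s + 1 = (p + q + s + 1).+1)%N by lia.
by rewrite binS.
Qed.

Local Open Scope ring_scope.
Definition P (m c : nat) : {poly int} := \poly_(a < m.+1) ('C(a, c))%:R.

Lemma inner k m t (ns : 'I_k -> nat) : (t <= m)%N ->
  \sum_(ms : {ffun 'I_k -> 'I_m.+1}
             | ((\sum_(i < k) (ms i : nat))%N == t)
               && [forall i, (ns i <= ms i)%N])
        (\prod_(i < k) 'C(ms i, ns i))%:Z = (\prod_(i < k) P m (ns i))`_t.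
Proof.
move=> _.
have -> : \prod_(i < k) P m (ns i) = \prod_(i < k) \sum_(a < m.+1) (('C(a, ns i))%:R)%:P * 'X^a.
  by apply: eq_bigr => i _; rewrite /P poly_def; apply: eq_bigr => a _; rewrite mul_polyC.
rewrite bigA_distr_bigA /= coef_sum.
have E : forall f : {ffun 'I_k -> 'I_m.+1}, (\prod_(i < k) ((('C(f i, ns i))%:R)%:P * 'X^(f i)) : {poly int})`_t
   = (\prod_(i < k) 'C(f i, ns i))%:Z * ((\sum_(i < k) (f i : nat))%N == t)%:R.
  move=> f; rewrite big_split /= prodrXr -rmorph_prod coefCM coefXn natz.
  by rewrite -natr_prod natz eq_sym; case: eqP.
rewrite (eq_bigr _ (fun f _ => E f)) {E}.
rewrite big_mkcond /=; apply: eq_bigr => f _.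
case: eqP => _ /=; first last.
  by rewrite mulr0.
rewrite mulr1; case: ifP => // /forallPn [i]; rewrite -ltnNge => Hi.
by rewrite (bigD1 i) //= bin_small.
Qed.

Lemma prodcoef K m (ns : 'I_K.+1 -> nat) t : (t <= m)%N ->
  (\prod_(i < K.+1) P m (ns i))`_t = ('C(t + K, \sum_(i < K.+1) ns i + K))%:R.
Proof.
elim: K ns t => [|K IH] ns t Ht.
  by rewrite !big_ord1 /P coef_poly ltnS Ht !addn0.
rewrite big_ord_recr [in RHS]big_ord_recr /= coefM.
have E : forall j : 'I_t.+1, (\prod_(i < K.+1) P m (ns (widen_ord (leqnSn K.+1) i)))`_j * (P m (ns ord_max))`_(t - j)
   = ('C(j + K, \sum_(i < K.+1) ns (widen_ord (leqnSn K.+1) i) + K) * 'C(t - j, ns ord_max))%:R.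
  move=> j; rewrite IH; last by apply: leq_trans Ht; rewrite -ltnS.
  by rewrite /P coef_poly ifT ?natrM // ltnS; exact: leq_trans (leq_subr _ _) Ht.
rewrite (eq_bigr _ (fun j _ => E j)) -natr_sum vand.
by rewrite !addn1 !addnS.
Qed.

Local Open Scope ring_scope.

Theorem proposition4p2 (k : nat) (ns : 'I_k -> nat) (n m : nat) :
  (1 <= k)%N ->
  n = (\sum_(i < k) ns i)%N ->
  (n + k - 1 <= m)%N ->
  ('C(m, n))%:Z =
  \sum_(j < k)
     (-1) ^+ j * ('C(k.-1, j))%:Z *
     \sum_(ms : {ffun 'I_k -> 'I_m.+1}
             | ((\sum_(i < k) (ms i : nat))%N == (m - j)%N)
               && [forall i, (ns i <= ms i)%N])
        (\prod_(i < k) 'C(ms i, ns i))%:Z.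
Proof.
case: k ns => [|K] ns // _ Hn Hm.
rewrite -natz -(altsum K m n) /=; apply: eq_bigr => j _.
rewrite inner ?leq_subr // prodcoef ?leq_subr // -Hn !natz.
have Hj : (j <= K)%N by rewrite -ltnS.
have -> : (m - j + K = m + K - j)%N by lia.
by [].
Qed.
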